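(* Let $m\ge3$, $C$ a set of $m$ candidates, $T$ the set of all $m!$ strict rankings of $C$, $w=(w_1,\dots,w_m)$ with $1=w_1\ge\cdots\ge w_m=0$, $\bar w=(w_1+\cdots+w_m)/m$, and $\sigma_t(\alpha)=w_i$ where $i$ is the position of $\alpha$ in $t\in T$. Let $(N_t)_{t\in T}$ be nonnegative integers with $\sum_tN_t=n$ and $|\alpha|=\sum_tN_t\sigma_t(\alpha)$. Suppose $|a|>|\alpha|$ for all $\alpha\ne a$, and $b\ne a$ satisfies $|b|\ge|\alpha|$ for all $\alpha\ne a$. Let $T_b$ be the set of types ranking $b$ first, $T_i$ ($1\le i\le m-1$) the set of types ranking $b$ in position $i$ and $a$ in position $i+1$, and $T_{ba}=\bigcup_iT_i$. Consider the linear programs (P2): $\min\sum_{t\in T_{ba}}x_t$ s.t. $\sum_{t\in T_b}y_t(1-\sigma_t(\alpha))-\sum_{t\in T_{ba}}x_t(\sigma_t(b)-\sigma_t(\alpha))\ge|\alpha|-|b|$ for all $\alpha\ne b$, $\sum_{t\in T_b}y_t=\sum_{t\in T_{ba}}x_t$, $x_t\ge0$, $y_t\ge0$; (P4): $\min\sum_{i=1}^{m-1}z_i$ s.t. $\sum_{i=1}^{m-1}(1-w_i+w_{i+1})z_i\ge|a|-|b|$, $\sum_{i=1}^{m-1}(1-w_i)z_i\ge n\bar w-|b|$, $z_i\ge0$; (P5): $\max\ (|a|-n\bar w)\lambda+(n\bar w-|b|)\mu$ s.t. $w_{i+1}\lambda+(1-w_i)\mu\le1$ for $i=1,\dots,m-1$,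 and $0\le\lambda\le\mu$. Then (P2) and (P4) have the same optimal value as (P5). Moreover, (P5) is unbounded if and only if (P2) and (P4) are infeasible. *)

(* Defs.v *)
From HB Require Import structures.
From mathcomp Require Import all_boot all_order all_algebra all_fingroup.
From mathcomp Require Import all_classical all_reals ereal.
Set Implicit Arguments. Unset Strict Implicit. Unset Printing Implicit Defensive.
Import Order.TTheory GRing.Theory Num.Theory.
Local Open Scope ring_scope.
Local Open Scope classical_set_scope.

(* Types (strict rankings): t : {perm 'I_m}, where
   t c (a nat in 0..m-1) is the 0-indexed position of candidate c in t.
   Weights: w : nat -> R, with w i (0-indexed) standing for the paper's w_{i+1}. *)

Section Voting.
Variables (R : realType) (m : nat) (w : nat -> R) (N : {perm 'I_m} -> nat)
  (a b : 'I_m).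

Definition sigma (t : {perm 'I_m}) (c : 'I_m) : R := w (t c).

Definition nvoters : nat := \sum_(t : {perm 'I_m}) N t.

Definition score (c : 'I_m) : R := \sum_(t : {perm 'I_m}) (N t)%:R * sigma t c.

Definition wbar : R := (\sum_(i < m) w i) / m%:R.

Definition Tb : pred {perm 'I_m} := fun t => (t b : nat) == 0%N.

Definition Tba : pred {perm 'I_m} := fun t => (t a : nat) == (t b).+1.

Definition P2_feasible (p : ({perm 'I_m} -> R) * ({perm 'I_m} -> R)) : Prop :=
  let x := p.1 in let y := p.2 in
  [/\ (forall c : 'I_m, c != b ->
        \sum_(t in Tb) y t * (1 - sigma t c)
        - \sum_(t in Tba) x t * (sigma t b - sigma t c) >= score c - score b),
      \sum_(t in Tb) y t = \sum_(t in Tba) x t,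
      (forall t, t \in Tba -> 0 <= x t) &
      (forall t, t \in Tb -> 0 <= y t)].

Definition P2_obj (p : ({perm 'I_m} -> R) * ({perm 'I_m} -> R)) : R :=
  \sum_(t in Tba) p.1 t.

(* optimal value of a minimization: inf over the feasible set (+oo if infeasible) *)
Definition P2_value : \bar R :=
  ereal_inf [set (P2_obj p)%:E | p in P2_feasible].

(* (P4): variables z_1..z_{m-1}, here z : 'I_(m.-1) -> R, z i = paper's z_{i+1} *)
Definition P4_feasible (z : 'I_(m.-1) -> R) : Prop :=
  [/\ \sum_(i < m.-1) (1 - w i + w i.+1) * z i >= score a - score b,
      \sum_(i < m.-1) (1 - w i) * z i >= nvoters%:R * wbar - score b &
      (forall i, 0 <= z i)].

Definition P4_obj (z : 'I_(m.-1) -> R) : R := \sum_(i < m.-1) z i.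

Definition P4_value : \bar R :=
  ereal_inf [set (P4_obj z)%:E | z in P4_feasible].

Definition P5_feasible (p : R * R) : Prop :=
  [/\ (forall i : nat, (i < m.-1)%N -> w i.+1 * p.1 + (1 - w i) * p.2 <= 1),
      0 <= p.1 & p.1 <= p.2].

Definition P5_obj (p : R * R) : R :=
  (score a - nvoters%:R * wbar) * p.1 + (nvoters%:R * wbar - score b) * p.2.

Definition P5_value : \bar R :=
  ereal_sup [set (P5_obj p)%:E | p in P5_feasible].

Definition P5_unbounded : Prop :=
  forall M : R, exists p, P5_feasible p /\ M < P5_obj p.

End Voting.

(* Main.v *)
Require Import Defs.
From HB Require Import structures.
From mathcomp Require Import all_boot all_order all_algebra all_fingroup.
From mathcomp Require Import all_classical all_reals ereal.
From mathcomp Require Import ring lra zify.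
Import Order.TTheory GRing.Theory Num.Theory.
Set Implicit Arguments. Unset Strict Implicit. Unset Printing Implicit Defensive.
Local Open Scope ring_scope.

Section Farkas.
Variable R : realFieldType.

Lemma sandwich (I : finType) (P Q : pred I) (L U : I -> R) :
  (forall p q, P p -> Q q -> L p <= U q) ->
  exists z, (forall p, P p -> L p <= z) /\ (forall q, Q q -> z <= U q).
Proof.
move=> H.
case: (pickP P) => [p0 Pp0|noP].
  exists (\big[Order.max/L p0]_(p | P p) L p); split.
    by move=> p Pp; rewrite (bigD1 p) //= le_max lexx.
  move=> q Qq; apply: (big_ind (fun x => x <= U q)); first exact: H.
    by move=> x y hx hy; rewrite ge_max hx hy.
  by move=> p Pp; exact: H.
exists (\big[Order.min/0]_(q | Q q) U q); split.
  by move=> p; rewrite noP.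
by move=> q Qq; rewrite (bigD1 q) //= ge_min lexx.
Qed.

Definition elim_fun (I : finType) (c F : I -> R) (k : (I + I * I)%type) : R :=
  match k with
  | inl i => if c i == 0 then F i else 0
  | inr pq => if (0 < c pq.1) && (c pq.2 < 0) then c pq.1 * F pq.2 - c pq.2 * F pq.1 else 0
  end.

Definition lift_mult (I : finType) (c : I -> R) (p' : (I + I * I)%type -> R) (i : I) : R :=
  (if c i == 0 then p' (inl i) else 0)
  + \sum_(q : I) (if (0 < c i) && (c q < 0) then p' (inr (i, q)) * (- c q) else 0)
  + \sum_(p : I) (if (0 < c p) && (c i < 0) then p' (inr (p, i)) * c p else 0).

Lemma lift_multE (I : finType) (c F : I -> R) p' :
  \sum_k p' k * elim_fun c F k = \sum_i lift_mult c p' i * F i.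
Proof.
rewrite big_sumType /=.
rewrite /lift_mult.
under [RHS]eq_bigr => i _ do rewrite !mulrDl.
rewrite !big_split /= -addrA; congr (_ + _).
  by apply: eq_bigr => i _; case: ifP => _; rewrite ?mulr0 ?mul0r.
under [X in _ = X + _]eq_bigr => i _ do rewrite mulr_suml.
under [X in _ = _ + X]eq_bigr => i _ do rewrite mulr_suml.
rewrite [X in _ = _ + X]exchange_big /= !pair_big -big_split /=.
apply: eq_bigr => [[p q]] _ /=.
case: ifP => _; last by rewrite !mulr0 !mul0r ?addr0.
by ring.
Qed.

Lemma farkas_set (J : finType) (n : nat) : forall (A : {set J}), #|A| = n ->
  forall (I : finType) (M : I -> J -> R) (r : I -> R),
  (exists x : J -> R, forall i, r i <= \sum_(j in A) M i j * x j) \/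
  (exists p : I -> R, (forall i, 0 <= p i) /\
     (forall j, j \in A -> \sum_i p i * M i j = 0) /\ 0 < \sum_i p i * r i).
Proof.
elim: n => [|n IH] A hA I M r.
  have -> : A = finset.set0 by apply/eqP; rewrite -cards_eq0 hA.
  case: (boolP [forall i, r i <= 0]) => [/forallP H|].
    by left; exists (fun _ => 0) => i; rewrite big_set0; exact: H.
  rewrite negb_forall => /existsP [i0]; rewrite -ltNge => hi0.
  right; exists (fun i => if i == i0 then 1 else 0); split; first by move=> i; case: ifP.
  split; first by move=> j; rewrite inE.
  rewrite (bigD1 i0) //= eqxx mul1r big1 ?addr0 // => i /negbTE ->; by rewrite mul0r.
have: (0 < #|A|)%N by rewrite hA.
rewrite card_gt0 => /set0Pn [j0 j0A].
have hA' : #|A :\ j0| = n by move: hA; rewrite (cardsD1 j0) j0A add1n => -[].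
pose c := fun i => M i j0.
have := IH (A :\ j0) hA' (I + I * I)%type (fun k j => elim_fun c (fun i => M i j) k) (elim_fun c r).
case=> [[x' Hx'] | [p' [p'0 [p'M p'r]]]].
  pose s := fun i => \sum_(j in A :\ j0) M i j * x' j.
  have sE : forall k, \sum_(j in A :\ j0) elim_fun c (fun i => M i j) k * x' j = elim_fun c s k.
    case=> [i|[p q]] /=.
      by case: ifP => _; [by [] | by rewrite big1 // => j _; rewrite mul0r].
    case: ifP => _; last by rewrite big1 // => j _; rewrite mul0r.
    by rewrite /s !mulr_sumr -sumrB; apply: eq_bigr => j _; ring.
  have hLU : forall p q, 0 < c p -> c q < 0 -> (r p - s p) / c p <= (r q - s q) / c q.
    move=> p q /= hp hq; have := Hx' (inr (p,q)); rewrite sE /= hp hq /= => h.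
    rewrite ler_pdivrMr // mulrAC ler_ndivlMr //; nra.
  have [z [Hz1 Hz2]] := @sandwich _ (fun p => 0 < c p) (fun q => c q < 0)
      (fun p => (r p - s p) / c p) (fun q => (r q - s q) / c q) hLU.
  left; exists (fun j => if j == j0 then z else x' j) => i.
  rewrite (bigD1 j0) //= eqxx.
  rewrite (eq_bigr (fun j => M i j * x' j)); last by move=> j /andP [_ /negbTE ->].
  have -> : \sum_(j in A | j != j0) M i j * x' j = s i.
    by rewrite /s; apply: eq_bigl => j; rewrite in_setD1 andbC.
  case: (ltgtP (c i) 0) => hc.
  - have := Hz2 i hc; rewrite /= ler_ndivlMr // /c => h; lra.
  - have := Hz1 i hc; rewrite /= ler_pdivrMr // /c => h; lra.
  - have := Hx' (inl i); rewrite sE /= hc eqxx /c => h.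
    by move: hc; rewrite /c => ->; rewrite mul0r add0r.
right; exists (lift_mult c p'); split; [|split].
- move=> i; rewrite /lift_mult; apply: addr_ge0; first apply: addr_ge0.
  + by case: ifP => _ //; exact: p'0.
  + apply: sumr_ge0 => q _; case: ifP => // /andP [_ hq]; apply: mulr_ge0 => //.
    by rewrite oppr_ge0 ltW.
  + apply: sumr_ge0 => p _; case: ifP => // /andP [hp _]; apply: mulr_ge0 => //.
    exact: ltW.
- move=> j jA; rewrite -(lift_multE c (fun i => M i j) p').
  case: (eqVneq j j0) => [->|hj].
    apply: big1 => -[i|[p q]] _ /=; case: ifP => H; rewrite ?mulr0 //.
      by move/eqP: H => H; have -> : M i j0 = 0 := H; rewrite mulr0.
    by rewrite /c [M q j0 * _]mulrC subrr mulr0.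
  by apply: p'M; rewrite in_setD1 hj jA.
- by rewrite -lift_multE.
Qed.

Lemma farkas (I J : finType) (M : I -> J -> R) (r : I -> R) :
  (exists x : J -> R, forall i, r i <= \sum_j M i j * x j) \/
  (exists p : I -> R, (forall i, 0 <= p i) /\
     (forall j, \sum_i p i * M i j = 0) /\ 0 < \sum_i p i * r i).
Proof.
have E : forall F : J -> R, \sum_(j in [set: J]) F j = \sum_j F j.
  by move=> F; apply: eq_bigl => j; rewrite inE.
have [[x Hx]|[p [p0 [pM pr]]]] := farkas_set (erefl #|[set: J]|) M r.
  by left; exists x => i; rewrite -E.
by right; exists p; split => //; split => // j; apply: pM; rewrite inE.
Qed.
End Farkas.


Local Open Scope classical_set_scope.

Lemma perm_set (T : finType) (t : {perm T}) (u q : T) :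
  (t * tperm (t u) q)%g u = q /\
  forall u', u' != u -> t u' != q -> (t * tperm (t u) q)%g u' = t u'.
Proof.
split; first by rewrite permM tpermL.
move=> u' h1 h2; rewrite permM tpermD //; last by rewrite eq_sym.
by rewrite (inj_eq perm_inj) eq_sym.
Qed.

Lemma perm2 (T : finType) (u1 u2 q1 q2 : T) : u1 != u2 -> q1 != q2 ->
  exists t : {perm T}, t u1 = q1 /\ t u2 = q2.
Proof.
move=> hu hq.
have [e1 _] := perm_set 1%g u1 q1.
move: e1; set t1 := (1 * _)%g => e1.
have [e2 f2] := perm_set t1 u2 q2.
move: e2 f2; set t2 := (t1 * _)%g => e2 f2.
exists t2; split => //; rewrite f2 // ?e1 //; by rewrite eq_sym.
Qed.

Lemma perm3 (T : finType) (u1 u2 u3 q1 q2 q3 : T) :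
  u1 != u2 -> u1 != u3 -> u2 != u3 -> q1 != q2 -> q1 != q3 -> q2 != q3 ->
  exists t : {perm T}, [/\ t u1 = q1, t u2 = q2 & t u3 = q3].
Proof.
move=> h12 h13 h23 k12 k13 k23.
have [t [e1 e2]] := perm2 h12 k12.
have [e3 f3] := perm_set t u3 q3.
move: e3 f3; set t3 := (t * _)%g => e3 f3.
exists t3; split => //.
  by rewrite f3 ?e1 // eq_sym.
by rewrite f3 ?e2 // eq_sym.
Qed.


Lemma sum_delta (R : ringType) (T : finType) (f : T -> R) (j : T) :
  \sum_i f i * (if i == j then 1 else 0) = f j.
Proof. by rewrite (bigD1 j) //= eqxx mulr1 big1 ?addr0 // => i /negbTE ->; rewrite mulr0. Qed.

Lemma sum_delta' (R : ringType) (T : finType) (f : T -> R) (j : T) :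
  \sum_i (if j == i then 1 else 0) * f i = f j.
Proof. by rewrite (bigD1 j) //= eqxx mul1r big1 ?addr0 // => i; rewrite eq_sym => /negbTE ->; rewrite mul0r. Qed.


Lemma sum_if (R : ringType) (T : finType) (P : pred T) (F G : T -> R) :
  \sum_t (if P t then F t else 0) * G t = \sum_(t | P t) F t * G t.
Proof. by rewrite [RHS]big_mkcond; apply: eq_bigr => t _; case: ifP; rewrite ?mul0r. Qed.

Lemma sum_ifl (R : ringType) (T : finType) (P : pred T) (F G : T -> R) :
  \sum_t G t * (if P t then F t else 0) = \sum_(t | P t) G t * F t.
Proof. by rewrite [RHS]big_mkcond; apply: eq_bigr => t _; case: ifP; rewrite ?mulr0. Qed.

Section Main.
Variables (R : realType) (m : nat) (w : nat -> R) (N : {perm 'I_m} -> nat) (a b : 'I_m).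
Hypotheses (hm : (3 <= m)%N) (w0 : w 0%N = 1) (wm : w m.-1 = 0)
  (wmono : forall i j : nat, (i <= j)%N -> (j < m)%N -> w j <= w i)
  (ha : forall c : 'I_m, c != a -> score w N c < score w N a)
  (hba : b != a)
  (hb : forall c : 'I_m, c != a -> score w N c <= score w N b).

Local Notation sc := (score w N).
Local Notation sg := (sigma w).
Local Notation S := (\sum_(i < m) w i).
Local Notation nn := ((nvoters N)%:R : R).
Local Notation Bv := (nn * wbar m w - sc b).

Lemma w_ge0 p : (p < m)%N -> 0 <= w p.
Proof. by move=> hp; rewrite -wm; apply: wmono => //; [rewrite -ltnS (ltn_predK hp) | rewrite prednK // (leq_ltn_trans _ hp)]. Qed.

Lemma w_le1 p : (p < m)%N -> w p <= 1.
Proof. by move=> hp; rewrite -w0; apply: wmono. Qed.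

Lemma sg_ge0 (t : {perm 'I_m}) (c : 'I_m) : 0 <= sg t c.
Proof. exact: w_ge0. Qed.

Lemma sg_le1 (t : {perm 'I_m}) (c : 'I_m) : sg t c <= 1.
Proof. exact: w_le1. Qed.

Lemma sum_sg (t : {perm 'I_m}) : \sum_c sg t c = S.
Proof. by rewrite [RHS](reindex_inj (@perm_inj _ t)). Qed.

Lemma sum_nb (F : 'I_m -> R) : \sum_(c | c != b) F c = \sum_c F c - F b.
Proof. rewrite [in RHS](bigD1 b) //=; ring. Qed.

Lemma sum_cst (k : R) : \sum_(c : 'I_m) k = m%:R * k.
Proof. by rewrite sumr_const card_ord mulr_natl. Qed.

Lemma sum_score : \sum_c sc c = nn * S.
Proof.
rewrite /score exchange_big /= /nvoters natr_sum mulr_suml.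
by apply: eq_bigr => t _; rewrite -mulr_sumr sum_sg.
Qed.

Lemma m_gt0 : (0 < m)%N. Proof. exact: leq_trans hm. Qed.

Lemma mB : m%:R * Bv = \sum_(c | c != b) (sc c - sc b).
Proof.
rewrite sum_nb subrr subr0 sumrB sum_score sum_cst /wbar.
have hm0 : (m%:R : R) != 0 by rewrite pnatr_eq0 -lt0n m_gt0.
by field.
Qed.


Lemma wd4 (z : 'I_(m.-1) -> R) (q : R * R) :
  P4_feasible w N a b z -> P5_feasible m w q -> P5_obj w N a b q <= P4_obj z.
Proof.
case=> h1 h2 hz [hq hl hlu].
set l := q.1; set u := q.2.
have e : \sum_(i < m.-1) z i * (w i.+1 * l + (1 - w i) * u) =
   l * \sum_(i < m.-1) (1 - w i + w i.+1) * z i + (u - l) * \sum_(i < m.-1) (1 - w i) * z i.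
  rewrite !mulr_sumr -big_split /=; apply: eq_bigr => i _; ring.
have le1 : \sum_(i < m.-1) z i * (w i.+1 * l + (1 - w i) * u) <= P4_obj z.
  rewrite /P4_obj; apply: ler_sum => i _.
  by rewrite -[leRHS]mulr1; apply: ler_wpM2l => //; apply: hq.
move: le1; rewrite e /P5_obj -/l -/u.
have hul : 0 <= u - l by rewrite subr_ge0.
move: h1 h2; set T1 := \sum_(i < m.-1) _; set T2 := \sum_(i < m.-1) _ => h1 h2 le1.
nra.
Qed.

Lemma TbaP (t : {perm 'I_m}) : t \in Tba a b -> (t a : nat) = (t b).+1 /\ (t b < m.-1)%N.
Proof. move=> /eqP h; split => //; have := ltn_ord (t a); rewrite h; lia. Qed.

Lemma TbP (t : {perm 'I_m}) : t \in Tb b -> (t b : nat) = 0%N.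
Proof. by move=> /eqP. Qed.

Lemma sgTb (t : {perm 'I_m}) : t \in Tb b -> sg t b = 1.
Proof. by move=> /TbP h; rewrite /sigma h. Qed.

Lemma wd2 (p : ({perm 'I_m} -> R) * ({perm 'I_m} -> R)) (q : R * R) :
  P2_feasible w N a b p -> P5_feasible m w q -> P5_obj w N a b q <= P2_obj a b p.
Proof.
case: p => x y; case=> /= Hc Heq Hx0 Hy0 [hq hl hlu].
set l := q.1; set u := q.2.
have hab : a != b by rewrite eq_sym.
set X := \sum_(t in Tba a b) x t.
have h1 : sc a - sc b <= \sum_(t in Tba a b) x t * (1 - sg t b + sg t a).
  have := Hc a hab.
  have : \sum_(t in Tb b) y t * (1 - sg t a) <= X.
    rewrite /X -Heq; apply: ler_sum => t tT.
    rewrite -[leRHS]mulr1; apply: ler_wpM2l; first exact: Hy0.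
    by rewrite lerBlDr lerDl sg_ge0.
  have -> : \sum_(t in Tba a b) x t * (1 - sg t b + sg t a) =
     X - \sum_(t in Tba a b) x t * (sg t b - sg t a).
    by rewrite /X -sumrB; apply: eq_bigr => t _; ring.
  lra.
have h2 : Bv <= \sum_(t in Tba a b) x t * (1 - sg t b).
  have hs : \sum_(c | c != b) (sc c - sc b) <= \sum_(c | c != b)
     (\sum_(t in Tb b) y t * (1 - sg t c) - \sum_(t in Tba a b) x t * (sg t b - sg t c)).
    by apply: ler_sum => c hc; exact: Hc.
  rewrite -mB sumrB [X in _ <= X - _]exchange_big [X in _ <= _ - X]exchange_big /= in hs.
  have ey : \sum_(t in Tb b) \sum_(c | c != b) y t * (1 - sg t c) =
      (m%:R - S) * X.
    rewrite /X -Heq mulr_sumr; apply: eq_bigr => t tT.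
    rewrite -mulr_sumr sum_nb sumrB sum_cst sum_sg sgTb //; ring.
  have ex : \sum_(t in Tba a b) \sum_(c | c != b) x t * (sg t b - sg t c) =
      \sum_(t in Tba a b) x t * (m%:R * sg t b - S).
    apply: eq_bigr => t tT.
    by rewrite -mulr_sumr sum_nb sumrB sum_cst sum_sg subrr subr0.
  rewrite ey ex in hs.
  have e3 : (m%:R - S) * X - \sum_(t in Tba a b) x t * (m%:R * sg t b - S) =
      m%:R * \sum_(t in Tba a b) x t * (1 - sg t b).
    rewrite /X mulr_sumr mulr_sumr -sumrB; apply: eq_bigr => t _; ring.
  rewrite e3 in hs.
  have hm0 : (0 : R) < m%:R by rewrite ltr0n m_gt0.
  by rewrite -(ler_pM2l hm0).
have h3 : \sum_(t in Tba a b) x t * (l * (1 - sg t b + sg t a) + (u - l) * (1 - sg t b))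
    <= P2_obj a b (x, y).
  rewrite /P2_obj /=; apply: ler_sum => t tT.
  rewrite -[leRHS]mulr1; apply: ler_wpM2l; first exact: Hx0.
  have [e1 e2] := TbaP tT.
  have := hq _ e2; rewrite /sigma e1; lra.
have e4 : \sum_(t in Tba a b) x t * (l * (1 - sg t b + sg t a) + (u - l) * (1 - sg t b)) =
   l * \sum_(t in Tba a b) x t * (1 - sg t b + sg t a) + (u - l) * \sum_(t in Tba a b) x t * (1 - sg t b).
  rewrite !mulr_sumr -big_split /=; apply: eq_bigr => t _; ring.
rewrite e4 in h3.
move: h1 h2 h3; rewrite /P5_obj -/l -/u.
set T1 := \sum_(t in Tba a b) _; set T2 := \sum_(t in Tba a b) _ => h1 h2 h3.
have hul : 0 <= u - l by rewrite subr_ge0.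
nra.
Qed.

Lemma P5bound (V : R) : (forall q, P5_feasible m w q -> P5_obj w N a b q <= V) ->
  forall l u p0, 0 <= p0 -> 0 <= l -> l <= u ->
  (forall i, (i < m.-1)%N -> w i.+1 * l + (1 - w i) * u <= p0) ->
  P5_obj w N a b (l, u) <= p0 * V.
Proof.
move=> HV l u p0 hp0 hl hlu hc.
have lin : forall k : R, P5_obj w N a b (k * l, k * u) = k * P5_obj w N a b (l, u).
  by move=> k; rewrite /P5_obj /=; ring.
have feas : forall k, 0 <= k -> k * p0 <= 1 -> P5_feasible m w (k * l, k * u).
  move=> k hk hkp; split => /=.
  - move=> i hi; have := hc i hi => h.
    have e : w i.+1 * (k * l) + (1 - w i) * (k * u) = k * (w i.+1 * l + (1 - w i) * u) by ring.
    by rewrite e (le_trans _ hkp) // ler_wpM2l.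
  - exact: mulr_ge0.
  - exact: ler_wpM2l.
case: (ltrP 0 p0) => hp.
  have hp' : p0 != 0 by rewrite gt_eqF.
  have hi : 0 <= p0^-1 by rewrite invr_ge0 ltW.
  have hq1 : p0^-1 * p0 <= 1 by rewrite mulVf.
  have hq := feas p0^-1 hi hq1.
  have := HV _ hq; rewrite lin => h.
  by have := ler_wpM2l hp0 h; rewrite mulrA mulfV // mul1r.
have p00 : p0 = 0 by apply/eqP; rewrite eq_le hp hp0.
rewrite p00 mul0r; case: (lerP (P5_obj w N a b (l, u)) 0) => // ho.
set k := (`|V| + 1) / P5_obj w N a b (l, u).
have hk : 0 <= k by rewrite /k divr_ge0 // ltW // ltr_pwDr.
have := HV _ (feas k hk _); rewrite ?p00 ?mulr0 // lin /k mulfVK ?gt_eqF //.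
have := ler_norm V; lra.
Qed.

Lemma types_exist (c0 : 'I_m) (i : nat) : c0 != b -> (i < m.-1)%N ->
  exists tx ty : {perm 'I_m}, [/\ tx \in Tba a b, ty \in Tb b, (tx b : nat) = i,
     (c0 != a -> (ty a : nat) = m.-1) &
     forall c, c != a -> c != b -> c != c0 -> 0 <= sg tx c - w i + 1 - sg ty c].
Proof.
move=> hc0b hi.
have hi0 : (i < m)%N by lia.
have hi1 : (i.+1 < m)%N by lia.
have hmm : (m.-1 < m)%N by lia.
pose q0 := Ordinal m_gt0; pose qi := Ordinal hi0; pose qi1 := Ordinal hi1; pose qm := Ordinal hmm.
have wi1 := w_le1 hi0.
have G1 : forall p : 'I_m, (p : nat) = 0%N -> 0 <= w p - w i + 1 - w i.
  by move=> p ->; rewrite w0; lra.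
have G2 : forall p : 'I_m, 0 <= w p - w i + 1 - w p.
  by move=> p; lra.
case: (eqVneq c0 a) => [c0a|c0a].
  have [tx [ex1 ex2]] : exists tx : {perm 'I_m}, tx b = qi /\ tx a = qi1.
    by apply: perm2 => //; rewrite -val_eqE /=; lia.
  pose ty := (tx * tperm q0 qi)%g.
  exists tx, ty; split.
  - by rewrite unfold_in /Tba ex1 ex2.
  - by rewrite unfold_in /Tb /ty permM ex1 tpermR.
  - by rewrite ex1.
  - by [].
  move=> c hca hcb hcc0.
  rewrite /sigma /ty permM.
  have hp1 : tx c != qi by rewrite -ex1 (inj_eq perm_inj).
  case: (eqVneq (tx c) q0) => [->|hp0].
    by rewrite tpermL; apply: G1.
  by rewrite tpermD 1?eq_sym //; apply: G2.
pose qs := if i.+2 == m then q0 else qm.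
have [tx [ex1 ex2 ex3]] : exists tx : {perm 'I_m}, [/\ tx b = qi, tx a = qi1 & tx c0 = qs].
  apply: perm3 => //; rewrite 1?eq_sym //.
  - by rewrite -val_eqE /=; lia.
  - by rewrite /qs; case: ifP => /eqP h; rewrite -val_eqE /=; lia.
  - by rewrite /qs; case: ifP => /eqP h; rewrite -val_eqE /=; lia.
pose ty := (tx * (tperm qi1 qm * tperm q0 qi))%g.
have tyE : forall c, ty c = tperm q0 qi (tperm qi1 qm (tx c)).
  by move=> c; rewrite /ty !permM.
exists tx, ty; split.
- by rewrite unfold_in /Tba ex1 ex2.
- rewrite unfold_in /Tb tyE ex1 (tpermD (x:=qi1)) ?tpermR //; rewrite -val_eqE /=; lia.
- by rewrite ex1.
- move=> _; rewrite tyE ex2 tpermL tpermD //; rewrite -val_eqE /=; lia.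
move=> c hca hcb hcc0.
rewrite /sigma tyE.
have hp1 : tx c != qi by rewrite -ex1 (inj_eq perm_inj).
have hp2 : tx c != qi1 by rewrite -ex2 (inj_eq perm_inj).
have hp3 : tx c != qs by rewrite -ex3 (inj_eq perm_inj).
have hpm : tx c != qm.
  move: hp2 hp3; rewrite /qs; case: ifP => /eqP h; rewrite -!val_eqE /=; lia.
rewrite (tpermD (x := qi1)) 1?eq_sym //.
case: (eqVneq (tx c) q0) => [->|hp0].
  by rewrite tpermL; apply: G1.
by rewrite tpermD 1?eq_sym //; apply: G2.
Qed.

Lemma DD (pi : 'I_m -> R) (nu p0 : R) :
  (forall c, c != b -> 0 <= pi c) ->
  (forall t, t \in Tba a b -> \sum_(c | c != b) pi c * (sg t c - sg t b) <= nu + p0) ->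
  (forall t, t \in Tb b -> \sum_(c | c != b) pi c * (1 - sg t c) + nu <= 0) ->
  exists l u, [/\ 0 <= l, l <= u,
     (forall i, (i < m.-1)%N -> w i.+1 * l + (1 - w i) * u <= p0) &
     \sum_(c | c != b) pi c * (sc c - sc b) <= P5_obj w N a b (l, u)].
Proof.
move=> hpi Hx Hy.
have hab : a != b by rewrite eq_sym.
have [c0 hc0b hmin] : exists2 c0, c0 != b & forall c, c != b -> pi c0 <= pi c.
  by case: (@arg_minP _ _ _ a (fun c => c != b) pi hab) => c0 h1 h2; exists c0.
set th := pi c0.
have hth : 0 <= th := hpi c0 hc0b.
have hm1 : (1 : R) <= m%:R by rewrite ler1n; lia.
exists (pi a - th), (pi a + (m%:R - 1) * th); split.
- by rewrite subr_ge0; exact: hmin.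
- nra.
- move=> i hi.
  have [tx [ty [txT tyT txb tya hG]]] := types_exist hc0b hi.
  have H := lerD (Hx tx txT) (Hy ty tyT).
  pose G c := sg tx c - w i + 1 - sg ty c.
  have e : \sum_(c | c != b) pi c * (sg tx c - sg tx b) +
      (\sum_(c | c != b) pi c * (1 - sg ty c) + nu) =
      \sum_(c | c != b) pi c * G c + nu.
    rewrite addrA -big_split /=; congr (_ + _); apply: eq_bigr => c _.
    by rewrite /G /sigma txb; ring.
  rewrite e addr0 in H.
  have H2 : \sum_(c | c != b) pi c * G c <= p0 by lra.
  have sG : \sum_(c | c != b) G c = m%:R * (1 - w i).
    rewrite sum_nb /G sumrB big_split /= sumrB !sum_cst !sum_sg.
    have := sgTb tyT; rewrite /sigma txb => ->; ring.
  have e2 : \sum_(c | c != b) pi c * G c =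
     th * \sum_(c | c != b) G c + \sum_(c | c != b) (pi c - th) * G c.
    rewrite mulr_sumr -big_split /=; apply: eq_bigr => c _; ring.
  have hrest : (pi a - th) * G a <= \sum_(c | c != b) (pi c - th) * G c.
    rewrite (bigD1 a) //= lerDl; apply: sumr_ge0 => c /andP [hcb hca].
    case: (eqVneq c c0) => [->|hcc0]; first by rewrite /th subrr mul0r.
    apply: mulr_ge0; first by rewrite subr_ge0; exact: hmin.
    exact: hG.
  have hGa : (pi a - th) * G a = (pi a - th) * (1 - w i + w i.+1).
    case: (eqVneq c0 a) => [c0a|c0a]; first by rewrite /th c0a subrr !mul0r.
    have [e1 _] := TbaP txT.
    by rewrite /G /sigma e1 txb tya // wm; congr (_ * _); ring.
  rewrite e2 sG hGa in H2 hrest.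
  have -> : w i.+1 * (pi a - th) + (1 - w i) * (pi a + (m%:R - 1) * th) =
     th * (m%:R * (1 - w i)) + (pi a - th) * (1 - w i + w i.+1) by ring.
  lra.
- have hr : forall c, c != a -> sc c - sc b <= 0 by move=> c hc; rewrite subr_le0 hb.
  rewrite (bigD1 a) //=.
  have : \sum_(c | (c != b) && (c != a)) pi c * (sc c - sc b) <=
         \sum_(c | (c != b) && (c != a)) th * (sc c - sc b).
    apply: ler_sum => c /andP [hcb hca].
    by apply: ler_wnM2r; [exact: hr | exact: hmin].
  rewrite -mulr_sumr.
  have -> : \sum_(c | (c != b) && (c != a)) (sc c - sc b) = m%:R * Bv - (sc a - sc b).
    by rewrite mB [in RHS](bigD1 a) //=; ring.
  have -> : P5_obj w N a b (pi a - th, pi a + (m%:R - 1) * th) =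
     pi a * (sc a - sc b) + th * (m%:R * Bv - (sc a - sc b)) by rewrite /P5_obj /=; ring.
  lra.
Qed.

Lemma FA4 (V : R) : (forall q, P5_feasible m w q -> P5_obj w N a b q <= V) ->
  exists z, P4_feasible w N a b z /\ P4_obj z <= V.
Proof.
move=> HV.
pose I4 := (bool + ('I_1 + 'I_(m.-1)))%type.
pose M4 := fun (k : I4) (i : 'I_(m.-1)) => match k with
  | inl true => 1 - w i + w i.+1
  | inl false => 1 - w i
  | inr (inl _) => -1
  | inr (inr i') => if i' == i then 1 else 0 end.
pose r4 := fun k : I4 => match k with
  | inl true => sc a - sc b | inl false => Bv | inr (inl _) => - V | inr (inr _) => 0 end.
case: (farkas M4 r4) => [[z Hz] | [p [p0 [pM pr]]]].
  exists z; split; first split.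
  - exact: (Hz (inl true)).
  - exact: (Hz (inl false)).
  - by move=> i; have := Hz (inr (inr i)); rewrite /= sum_delta'.
  - have := Hz (inr (inl ord0)); rewrite /=.
    under eq_bigr do rewrite mulN1r.
    by rewrite sumrN lerN2.
exfalso.
set u := p (inl true); set v := p (inl false); set q0 := p (inr (inl ord0)).
have col : forall i : 'I_(m.-1), u * (1 - w i + w i.+1) + v * (1 - w i) <= q0.
  move=> i; have := pM i.
  rewrite big_sumType /= big_bool /= big_sumType /= big_ord1 /= sum_delta.
  have := p0 (inr (inr i)); rewrite -/u -/v -/q0; lra.
have hu : 0 <= u := p0 _.
have hv : 0 <= v := p0 _.
have hq0 : 0 <= q0 := p0 _.
have hb1 : u <= u + v by lra.
have hc : forall i, (i < m.-1)%N -> w i.+1 * u + (1 - w i) * (u + v) <= q0.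
  by move=> i hi; have := col (Ordinal hi); rewrite /=; nra.
have := P5bound HV hq0 hu hb1 hc.
move: pr; rewrite big_sumType /= big_bool /= big_sumType /= big_ord1 /=.
rewrite big1 ?addr0; last by move=> i _; rewrite mulr0.
rewrite /P5_obj /= -/u -/v -/q0.
nra.
Qed.

Lemma FA2 (V : R) : (forall q, P5_feasible m w q -> P5_obj w N a b q <= V) ->
  exists p, P2_feasible w N a b p /\ P2_obj a b p <= V.
Proof.
move=> HV.
pose J2 := ({perm 'I_m} + {perm 'I_m})%type.
pose I2 := ('I_m + (bool + ('I_1 + J2)))%type.
pose M2 := fun (k : I2) (j : J2) => match k, j with
 | inl c, inl t => if (c != b) && (t \in Tba a b) then sg t c - sg t b else 0
 | inl c, inr t => if (c != b) && (t \in Tb b) then 1 - sg t c else 0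
 | inr (inl true), inl t => if t \in Tba a b then -1 else 0
 | inr (inl true), inr t => if t \in Tb b then 1 else 0
 | inr (inl false), inl t => if t \in Tba a b then 1 else 0
 | inr (inl false), inr t => if t \in Tb b then -1 else 0
 | inr (inr (inl _)), inl t => if t \in Tba a b then -1 else 0
 | inr (inr (inl _)), inr _ => 0
 | inr (inr (inr j')), j => if j' == j then 1 else 0
 end.
pose r2 := fun k : I2 => match k with
 | inl c => if c != b then sc c - sc b else 0
 | inr (inr (inl _)) => - V
 | _ => 0 end.
case: (farkas M2 r2) => [[x Hz] | [p [p0 [pM pr]]]].
  exists (fun t => x (inl t), fun t => x (inr t)); split; first split.
  - move=> c hc; have := Hz (inl c); rewrite /= hc big_sumType /= !sum_if.
    have -> : \sum_(t in Tb b) x (inr t) * (1 - sg t c) = \sum_(t in Tb b) (1 - sg t c) * x (inr t).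
      by apply: eq_bigr => t _; rewrite mulrC.
    have -> : \sum_(t in Tba a b) x (inl t) * (sg t b - sg t c) = - \sum_(t in Tba a b) (sg t c - sg t b) * x (inl t).
      by rewrite -sumrN; apply: eq_bigr => t _; ring.
    lra.
  - have := Hz (inr (inl true)); have := Hz (inr (inl false)).
    rewrite /= !big_sumType /= !sum_if.
    have E1 : forall (P : pred {perm 'I_m}) (f : {perm 'I_m} -> R),
        \sum_(t | P t) 1 * f t = \sum_(t | P t) f t.
      by move=> P f; apply: eq_bigr => t _; rewrite mul1r.
    have E2 : forall (P : pred {perm 'I_m}) (f : {perm 'I_m} -> R),
        \sum_(t | P t) -1 * f t = - \sum_(t | P t) f t.
      by move=> P f; rewrite -sumrN; apply: eq_bigr => t _; rewrite mulN1r.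
    rewrite !E1 !E2; lra.
  - by move=> t _; have := Hz (inr (inr (inr (inl t)))); rewrite /= sum_delta'.
  - by move=> t _; have := Hz (inr (inr (inr (inr t)))); rewrite /= sum_delta'.
  have := Hz (inr (inr (inl ord0))); rewrite /= big_sumType /= sum_if.
  have -> : \sum_(i : {perm 'I_m}) 0 * x (inr i) = 0 by rewrite big1 // => i _; rewrite mul0r.
  have -> : \sum_(t in Tba a b) -1 * x (inl t) = - \sum_(t in Tba a b) x (inl t).
    by rewrite -sumrN; apply: eq_bigr => t _; rewrite mulN1r.
  by rewrite addr0 lerN2.
exfalso.
set pT := p (inr (inl true)); set pF := p (inr (inl false)); set q0 := p (inr (inr (inl ord0))).
have Hx : forall t, t \in Tba a b ->
    \sum_(c | c != b) p (inl c) * (sg t c - sg t b) <= (pT - pF) + q0.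
  move=> t tT; have := pM (inl t).
  rewrite big_sumType /= big_sumType /= big_bool /= big_sumType /= big_ord1 /= sum_delta tT.
  under eq_bigr do rewrite andbT.
  rewrite sum_ifl -/pT -/pF -/q0.
  have := p0 (inr (inr (inr (inl t)))); lra.
have Hy : forall t, t \in Tb b ->
    \sum_(c | c != b) p (inl c) * (1 - sg t c) + (pT - pF) <= 0.
  move=> t tT; have := pM (inr t).
  rewrite big_sumType /= big_sumType /= big_bool /= big_sumType /= big_ord1 /= sum_delta tT.
  under eq_bigr do rewrite andbT.
  rewrite sum_ifl -/pT -/pF -/q0.
  have := p0 (inr (inr (inr (inr t)))); lra.
have [l [u [hl hlu hc hobj]]] := DD (fun c _ => p0 (inl c)) Hx Hy.
have := P5bound HV (p0 _) hl hlu hc; rewrite -/q0.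
move: pr; rewrite big_sumType /= big_sumType /= big_bool /= big_sumType /= big_ord1 /= sum_ifl.
have -> : \sum_i p (inr (inr (inr i))) * 0 = 0 by rewrite big1 // => i _; rewrite mulr0.
rewrite -/q0; lra.
Qed.

Lemma main : [/\ P2_value w N a b = P5_value w N a b,
      P4_value w N a b = P5_value w N a b &
      (P5_unbounded w N a b <->
        (~ (exists p, P2_feasible w N a b p) /\
         ~ (exists z, P4_feasible w N a b z)))].
Proof.
case: (pselect (P5_unbounded w N a b)) => [unb|bdd].
  have no2 : ~ exists p, P2_feasible w N a b p.
    by move=> [p hp]; have [q [hq hlt]] := unb (P2_obj a b p); have := wd2 hp hq; lra.
  have no4 : ~ exists z, P4_feasible w N a b z.
    by move=> [z hz]; have [q [hq hlt]] := unb (P4_obj z); have := wd4 hz hq; lra.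
  have v5 : P5_value w N a b = +oo%E.
    have H : forall r : R, (r%:E <= P5_value w N a b)%E.
      move=> r; have [q [hq hlt]] := unb r.
      apply: le_ereal_sup_tmp; exists (P5_obj w N a b q)%:E; first by exists q.
      by rewrite lee_fin ltW.
    case E: (P5_value w N a b) => [r| |] //.
      by have := H (r + 1)%R; rewrite E lee_fin gerDl ler10.
    by have := H 0; rewrite E.
  have v2 : P2_value w N a b = +oo%E.
    rewrite /P2_value (_ : [set _ | p in _] = set0) ?ereal_inf0 //.
    by apply/seteqP; split => // y [p hp _]; apply: no2; exists p.
  have v4 : P4_value w N a b = +oo%E.
    rewrite /P4_value (_ : [set _ | z in _] = set0) ?ereal_inf0 //.
    by apply/seteqP; split => // y [z hz _]; apply: no4; exists z.
  by split; rewrite ?v2 ?v4 ?v5 //.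
have [V HV] : exists V, forall q, P5_feasible m w q -> P5_obj w N a b q <= V.
  apply: contra_notP bdd => hno M; apply: contra_notP hno => hM.
  by exists M => q hq; rewrite leNgt; apply/negP => hlt; apply: hM; exists q.
have f00 : P5_feasible m w (0, 0).
  by split => //= i _; rewrite !mulr0 addr0.
have o00 : P5_obj w N a b (0, 0) = 0 by rewrite /P5_obj /= !mulr0 addr0.
have s_ge0 : (0%:E <= P5_value w N a b)%E.
  by apply: le_ereal_sup_tmp; exists 0%:E => //; exists (0, 0); rewrite ?o00.
have s_le : (P5_value w N a b <= V%:E)%E.
  by apply: ge_ereal_sup => y [q hq <-]; rewrite lee_fin; exact: HV.
have [v vE] : exists v : R, P5_value w N a b = v%:E.
  case E: (P5_value w N a b) s_ge0 s_le => [r| |] //; by exists r.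
have Hv : forall q, P5_feasible m w q -> P5_obj w N a b q <= v.
  move=> q hq; rewrite -lee_fin -vE.
  by apply: ereal_sup_ubound; exists q.
have [p2 [hp2 hp2v]] := FA2 Hv.
have [z [hz hzv]] := FA4 Hv.
split.
- apply/eqP; rewrite eq_le; apply/andP; split.
    by apply: ge_ereal_inf; exists (P2_obj a b p2)%:E; [exists p2 | rewrite vE lee_fin].
  apply: le_ereal_inf_tmp => y [p hp <-].
  by apply: ge_ereal_sup => y' [q hq <-]; rewrite lee_fin; exact: wd2.
- apply/eqP; rewrite eq_le; apply/andP; split.
    by apply: ge_ereal_inf; exists (P4_obj z)%:E; [exists z | rewrite vE lee_fin].
  apply: le_ereal_inf_tmp => y [z' hz' <-].
  by apply: ge_ereal_sup => y' [q hq <-]; rewrite lee_fin; exact: wd4.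
- split => [unb|[n2 _]]; first by exfalso; exact: bdd.
  by exfalso; apply: n2; exists p2.
Qed.
End Main.

Theorem theorem11 (R : realType) (m : nat) (w : nat -> R)
  (N : {perm 'I_m} -> nat) (a b : 'I_m) :
  (3 <= m)%N ->
  w 0%N = 1 -> w m.-1 = 0 ->
  (forall i j : nat, (i <= j)%N -> (j < m)%N -> w j <= w i) ->
  (forall c : 'I_m, c != a -> score w N c < score w N a) ->
  b != a ->
  (forall c : 'I_m, c != a -> score w N c <= score w N b) ->
  [/\ P2_value w N a b = P5_value w N a b,
      P4_value w N a b = P5_value w N a b &
      (P5_unbounded w N a b <->
        (~ (exists p, P2_feasible w N a b p) /\
         ~ (exists z, P4_feasible w N a b z)))].
Proof. by move=> *; apply: main. Qed.
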